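(* Let $\lambda$ be a nonzero real number. For every integer $n\ge0$ and every real $x$ with $1+\lambda x>0$, \[ \mathrm{Bel}_{n+1,\lambda}(x)=\frac{x}{1+\lambda x}\Big(\mathrm{Bel}_{n,\lambda}'(x)+\mathrm{Bel}_{n,\lambda}(x)+\lambda x\,\mathrm{Bel}_{n,\lambda}'(x)\Big), \] where $\mathrm{Bel}_{n,\lambda}'(x)=\frac{d}{dx}\mathrm{Bel}_{n,\lambda}(x)$.
   Context: For nonzero real $\lambda$, $e_\lambda(x)=(1+\lambda x)^{1/\lambda}$ and $e_\lambda^{-1}(x)=(1+\lambda x)^{-1/\lambda}$. The new type degenerate Bell polynomials $\mathrm{Bel}_{n,\lambda}(x)$ are defined by $e_{\lambda}(xe^{t})\,e_{\lambda}^{-1}(x)=\big(\frac{1+\lambda xe^t}{1+\lambda x}\big)^{1/\lambda}=\sum_{n=0}^{\infty}\mathrm{Bel}_{n,\lambda}(x)\frac{t^{n}}{n!}$ (expansion in powers of $t$). *)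

(* Defs.v *)
From Stdlib Require Import Reals.
From Coquelicot Require Import Coquelicot.
Open Scope R_scope.

(* Generating function of the new type degenerate Bell polynomials:
   t |-> e_lambda(x e^t) e_lambda^{-1}(x) = ((1 + lambda x e^t)/(1 + lambda x))^(1/lambda).
   Near t = 0 (when 1 + lambda x > 0) the base is positive, so Rpower is the
   genuine real power. *)
Definition belGF (lam x t : R) : R :=
  Rpower ((1 + lam * x * exp t) / (1 + lam * x)) (1 / lam).

(* Bel_{n,lambda}(x): the coefficient of t^n/n! in the expansion in powers
   of t, i.e. the n-th t-derivative of the generating function at t = 0. *)
Definition Bel (n : nat) (lam x : R) : R :=
  Derive_n (fun t => belGF lam x t) n 0.

(* Main.v *)
Require Import Defs.
From Stdlib Require Import Reals Lra.
From Coquelicot Require Import Coquelicot.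
Open Scope R_scope.

Inductive IsPoly : (R -> R) -> Prop :=
| IPc c : IsPoly (fun _ => c)
| IPid : IsPoly (fun v => v)
| IPadd f g : IsPoly f -> IsPoly g -> IsPoly (fun v => f v + g v)
| IPopp f : IsPoly f -> IsPoly (fun v => - f v)
| IPmul f g : IsPoly f -> IsPoly g -> IsPoly (fun v => f v * g v).

Lemma poly_deriv f : IsPoly f -> exists g, IsPoly g /\ forall v, is_derive f v (g v).
Proof.
  induction 1 as [c| |f g _ [f' [Pf Df]] _ [g' [Pg Dg]]|f _ [f' [Pf Df]]|f g Hf [f' [Pf Df]] Hg [g' [Pg Dg]]].
  - exists (fun _ => 0). split. constructor. intro v. auto_derive; auto.
  - exists (fun _ => 1). split. constructor. intro v. auto_derive; auto.
  - exists (fun v => f' v + g' v). split. now constructor.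
    intro v. exact (is_derive_plus f g v _ _ (Df v) (Dg v)).
  - exists (fun v => - f' v). split. now constructor.
    intro v. exact (is_derive_opp f v _ (Df v)).
  - exists (fun v => f' v * g v + f v * g' v). split.
    + constructor; constructor; auto.
    + intro v. exact (is_derive_mult f g v _ _ (Df v) (Dg v) Rmult_comm).
Qed.

Lemma is_derive_eq (f : R -> R) x l l' : is_derive f x l -> l = l' -> is_derive f x l'.
Proof. intros H ->; exact H. Qed.

Definition hh lam x s := 1 + lam * x * exp s.
Definition vv lam x s := x * exp s / (1 + lam * x * exp s).

Lemma belGF_deriv lam x t : lam <> 0 -> 0 < 1 + lam * x -> 0 < hh lam x t ->
  is_derive (fun s => belGF lam x s) t (belGF lam x t * vv lam x t).
Proof.
  unfold hh, vv, belGF, Rpower. intros Hl Hx Ht.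
  auto_derive.
  - apply Rdiv_lt_0_compat; lra.
  - unfold Rdiv. field. repeat split; try exact Hl; lra.
Qed.

Lemma vv_deriv lam x t : 0 < hh lam x t ->
  is_derive (fun s => vv lam x s) t (vv lam x t * (1 - lam * vv lam x t)).
Proof.
  unfold hh, vv. intros Ht. auto_derive.
  - lra.
  - field. lra.
Qed.

Lemma key lam x t p g : lam <> 0 -> 0 < 1 + lam * x -> 0 < hh lam x t ->
  (forall v, is_derive p v (g v)) ->
  is_derive (fun s => belGF lam x s * p (vv lam x s)) t
    (belGF lam x t * (vv lam x t * p (vv lam x t)
        + g (vv lam x t) * (vv lam x t * (1 - lam * vv lam x t)))).
Proof.
  intros Hl Hx Ht Dp.
  eapply is_derive_eq.
  - exact (is_derive_mult (fun s => belGF lam x s) (fun s => p (vv lam x s)) t _ _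
      (belGF_deriv lam x t Hl Hx Ht)
      (is_derive_comp p (fun s => vv lam x s) t _ _ (Dp _) (vv_deriv lam x t Ht)) Rmult_comm).
  - simpl. unfold mult, plus, scal; simpl. unfold mult; simpl. ring.
Qed.

Lemma hh_loc lam x t : 0 < hh lam x t -> locally t (fun s => 0 < hh lam x s).
Proof.
  intros H.
  assert (C : continuous (fun s => hh lam x s) t).
  { apply (@ex_derive_continuous R_AbsRing R_NormedModule). unfold hh. auto_derive. auto. }
  exact (C (fun y => 0 < y) (open_gt 0 _ H)).
Qed.

Lemma repr lam n : lam <> 0 -> exists p, IsPoly p /\
  forall x t, 0 < 1 + lam * x -> 0 < hh lam x t ->
    Derive_n (fun s => belGF lam x s) n t = belGF lam x t * p (vv lam x t).
Proof.
  intro Hl. induction n as [|n [p [Pp Hp]]].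
  - exists (fun _ => 1). split. constructor. intros. simpl. ring.
  - destruct (poly_deriv p Pp) as [g [Pg Dg]].
    exists (fun v => v * p v + g v * (v * (1 - lam * v))). split.
    + repeat constructor; auto.
    + intros x t Hx Ht. simpl.
      rewrite (Derive_ext_loc _ (fun s => belGF lam x s * p (vv lam x s))).
      * apply is_derive_unique. apply key; auto.
      * eapply filter_imp; [|exact (hh_loc _ _ _ Ht)]. intros s Hs. apply Hp; auto.
Qed.

Theorem theorem9 (lam : R) (n : nat) (x : R) :
  lam <> 0 -> 0 < 1 + lam * x ->
  Bel (S n) lam x =
    x / (1 + lam * x) *
      (Derive (fun y => Bel n lam y) x + Bel n lam x
       + lam * x * Derive (fun y => Bel n lam y) x).
Proof.
  intros Hl Hx.
  destruct (repr lam n Hl) as [p [Pp Hp]].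
  destruct (poly_deriv p Pp) as [g [Pg Dg]].
  assert (H0 : forall y, 0 < 1 + lam * y -> 0 < hh lam y 0).
  { intros y Hy. unfold hh. rewrite exp_0. lra. }
  assert (F0 : forall y, 0 < 1 + lam * y -> belGF lam y 0 = 1).
  { intros y Hy. unfold belGF, Rpower. rewrite exp_0, Rmult_1_r.
    rewrite Rdiv_diag by lra. rewrite ln_1, Rmult_0_r. apply exp_0. }
  assert (V0 : forall y, vv lam y 0 = y / (1 + lam * y)).
  { intros y. unfold vv. rewrite exp_0, !Rmult_1_r. reflexivity. }
  assert (BelE : forall y, 0 < 1 + lam * y -> Bel n lam y = p (y / (1 + lam * y))).
  { intros y Hy. unfold Bel. rewrite Hp; auto. rewrite F0, V0; auto. ring. }
  assert (LHS : Bel (S n) lam x =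
     (x / (1 + lam * x)) * p (x / (1 + lam * x))
     + g (x / (1 + lam * x)) * (x / (1 + lam * x) * (1 - lam * (x / (1 + lam * x))))).
  { unfold Bel. simpl.
    rewrite (Derive_ext_loc _ (fun s => belGF lam x s * p (vv lam x s))).
    - erewrite is_derive_unique; [| apply (key lam x 0 p g Hl Hx (H0 x Hx) Dg)].
      rewrite F0, V0; auto. ring.
    - eapply filter_imp; [|exact (hh_loc _ _ _ (H0 x Hx))]. intros s Hs. apply Hp; auto. }
  assert (D : Derive (fun y => Bel n lam y) x = g (x / (1 + lam * x)) / (1 + lam * x) ^ 2).
  { rewrite (Derive_ext_loc _ (fun y => p (y / (1 + lam * y)))).
    - apply is_derive_unique.
      assert (Dw : is_derive (fun y => y / (1 + lam * y)) x (1 / (1 + lam * x) ^ 2)).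
      { auto_derive. lra. field. lra. }
      eapply is_derive_eq.
      + exact (is_derive_comp p (fun y => y / (1 + lam * y)) x _ _ (Dg _) Dw).
      + unfold scal; simpl. unfold mult; simpl. field. lra.
    - assert (C : continuous (fun y => 1 + lam * y) x).
      { apply (@ex_derive_continuous R_AbsRing R_NormedModule). auto_derive. auto. }
      eapply filter_imp; [|exact (C (fun y => 0 < y) (open_gt 0 _ Hx))].
      intros y Hy. apply BelE; auto. }
  rewrite LHS, D, BelE; auto.
  set (w := x / (1 + lam * x)). set (P := p w). set (G := g w).
  unfold w. field. lra.
Qed.
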